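(* The canonical model $\mathcal M_c=(|\mathcal M_c|,\preccurlyeq_c,S_c,\ell_c)$ is a deterministic weak $\mathcal L_\Diamond$-quasimodel.
   Context: $\mathcal L_\Diamond$ is the propositional language with $\bot,\wedge,\vee,\to$ and unary modalities $\bigcirc$, $\Diamond$. ${\sf ITL}^0_\Diamond$ is the logic axiomatized by all intuitionistic propositional tautologies, $\neg\bigcirc\bot$, $\bigcirc\varphi\wedge\bigcirc\psi\to\bigcirc(\varphi\wedge\psi)$, $\bigcirc(\varphi\vee\psi)\to\bigcirc\varphi\vee\bigcirc\psi$, $\bigcirc(\varphi\to\psi)\to(\bigcirc\varphi\to\bigcirc\psi)$, $\varphi\vee\bigcirc\Diamond\varphi\to\Diamond\varphi$, closed under modus ponens and the rules $\varphi/\bigcirc\varphi$, $(\varphi\to\psi)/(\Diamond\varphi\to\Diamond\psi)$, $(\bigcirc\varphi\to\varphi)/(\Diamond\varphi\to\varphi)$. $\Gamma\vdash\Delta$ means ${\sf ITL}^0_\Diamond\vdash\bigwedge\Gamma'\to\bigvee\Delta'$ for some finite $\Gamma'\subseteq\Gamma$, $\Delta'\subseteq\Delta$. A prime type is a pair $\Phi=(\Phi^-,\Phi^+)$ of sets of formulas with $\Phi^-\cup\Phi^+=\mathcal L_\Diamond$ and $\Phi^+\not\vdash\Phi^-$. For $\Sigma$ closed under subformulas, a $\Sigma$-type is a pair $\Phi=(\Phi^-;\Phi^+)$ of subsets of $\Sigma$ with: $\Phi^-\cap\Phi^+=\varnothing$; $\Phi^-\cup\Phi^+=\Sigma$; $\bot\notin\Phi^+$;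 $\varphi\wedge\psi\in\Phi^+$ iff $\varphi,\psi\in\Phi^+$; $\varphi\vee\psi\in\Phi^+$ iff $\varphi\in\Phi^+$ or $\psi\in\Phi^+$; if $\varphi\to\psi\in\Phi^+$ then $\varphi\in\Phi^-$ or $\psi\in\Phi^+$; if $\Diamond\varphi\in\Phi^-$ then $\varphi\in\Phi^-$. $\Phi\preccurlyeq_T\Psi$ iff $\Phi^+\subseteq\Psi^+$. $\Phi\,S_T\,\Psi$ iff for all $\varphi$: $\bigcirc\varphi\in\Phi^+\Rightarrow\varphi\in\Psi^+$; $\bigcirc\varphi\in\Phi^-\Rightarrow\varphi\in\Psi^-$; ($\Diamond\varphi\in\Phi^+$ and $\varphi\in\Phi^-$) $\Rightarrow\Diamond\varphi\in\Psi^+$; $\Diamond\varphi\in\Phi^-\Rightarrow\Diamond\varphi\in\Psi^-$. A $\Sigma$-labelled frame is $(W,\preccurlyeq,\ell)$ with $\preccurlyeq$ a partial order, $\ell$ mapping $W$ to $\Sigma$-types, $w\preccurlyeq v\Rightarrow\ell(w)\preccurlyeq_T\ell(v)$, and whenever $\varphi\to\psi\in\ell^-(w)$ there is $v\succcurlyeq w$ with $\varphi\in\ell^+(v)$, $\psi\in\ell^-(v)$. A weak $\Sigma$-quasimodel is $(W,\preccurlyeq,S,\ell)$ with $(W,\preccurlyeq,\ell)$ a $\Sigma$-labelled frame and $S\subseteq W\times W$ forward-confluent (if $w\preccurlyeq w'$ and $w\,S\,v$ then some $v'\succcurlyeq v$ has $w'\,S\,v'$) and sensible ($w\,S\,v\Rightarrow\ell(w)\,S_T\,\ell(v)$);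 it is deterministic if $S$ is a function. The canonical model $\mathcal M_c$: domain the set of prime types, $\preccurlyeq_c$ is $\preccurlyeq_T$ restricted to prime types, $S_c$ is $S_T$ restricted to prime types, $\ell_c$ is the identity. *)

(* Defs.v *)
From Stdlib Require Import List.
Import ListNotations.

Inductive form : Type :=
| Var  : nat -> form
| Bot  : form
| And  : form -> form -> form
| Or   : form -> form -> form
| Imp  : form -> form -> form
| Next : form -> form
| Dia  : form -> form.

Definition Top : form := Imp Bot Bot.

(** * The logic ITL^0_Diamond (Hilbert style).
    "All intuitionistic propositional tautologies" are given by a standard
    schematic Hilbert axiomatization of intuitionistic propositional logic
    (instantiated over the whole language L_Diamond) together with modus ponens. *)
Inductive ITL0 : form -> Prop :=
| ax_K  : forall p q, ITL0 (Imp p (Imp q p))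
| ax_S  : forall p q r,
    ITL0 (Imp (Imp p (Imp q r)) (Imp (Imp p q) (Imp p r)))
| ax_andE1 : forall p q, ITL0 (Imp (And p q) p)
| ax_andE2 : forall p q, ITL0 (Imp (And p q) q)
| ax_andI  : forall p q, ITL0 (Imp p (Imp q (And p q)))
| ax_orI1  : forall p q, ITL0 (Imp p (Or p q))
| ax_orI2  : forall p q, ITL0 (Imp q (Or p q))
| ax_orE   : forall p q r,
    ITL0 (Imp (Imp p r) (Imp (Imp q r) (Imp (Or p q) r)))
| ax_efq   : forall p, ITL0 (Imp Bot p)
| ax_nextbot : ITL0 (Imp (Next Bot) Bot)
| ax_nextand : forall p q, ITL0 (Imp (And (Next p) (Next q)) (Next (And p q)))
| ax_nextor  : forall p q, ITL0 (Imp (Next (Or p q)) (Or (Next p) (Next q)))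
| ax_nextimp : forall p q, ITL0 (Imp (Next (Imp p q)) (Imp (Next p) (Next q)))
| ax_diafix  : forall p, ITL0 (Imp (Or p (Next (Dia p))) (Dia p))
| r_mp : forall p q, ITL0 (Imp p q) -> ITL0 p -> ITL0 q
| r_nec : forall p, ITL0 p -> ITL0 (Next p)
| r_diamon : forall p q, ITL0 (Imp p q) -> ITL0 (Imp (Dia p) (Dia q))
| r_ind : forall p, ITL0 (Imp (Next p) p) -> ITL0 (Imp (Dia p) p).

Definition fset := form -> Prop.

Definition bigAnd (l : list form) : form := fold_right And Top l.
Definition bigOr  (l : list form) : form := fold_right Or Bot l.

Definition entails (Gamma Delta : fset) : Prop :=
  exists (G D : list form),
    (forall f, In f G -> Gamma f) /\ (forall f, In f D -> Delta f) /\
    ITL0 (Imp (bigAnd G) (bigOr D)).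

Definition ftype := (fset * fset)%type.
Definition neg (P : ftype) : fset := fst P.
Definition pos (P : ftype) : fset := snd P.

Definition prime_type (P : ftype) : Prop :=
  (forall f, neg P f \/ pos P f) /\ ~ entails (pos P) (neg P).

Definition sigma_type (Sigma : fset) (P : ftype) : Prop :=
  (forall f, ~ (neg P f /\ pos P f)) /\
  (forall f, Sigma f <-> (neg P f \/ pos P f)) /\
  ~ pos P Bot /\
  (forall f g, Sigma (And f g) -> (pos P (And f g) <-> (pos P f /\ pos P g))) /\
  (forall f g, Sigma (Or f g) -> (pos P (Or f g) <-> (pos P f \/ pos P g))) /\
  (forall f g, pos P (Imp f g) -> neg P f \/ pos P g) /\
  (forall f, neg P (Dia f) -> neg P f).

Definition le_T (P Q : ftype) : Prop := forall f, pos P f -> pos Q f.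

Definition S_T (P Q : ftype) : Prop :=
  (forall f, pos P (Next f) -> pos Q f) /\
  (forall f, neg P (Next f) -> neg Q f) /\
  (forall f, pos P (Dia f) /\ neg P f -> pos Q (Dia f)) /\
  (forall f, neg P (Dia f) -> neg Q (Dia f)).

Definition partial_order {W : Type} (R : W -> W -> Prop) : Prop :=
  (forall w, R w w) /\
  (forall u v w, R u v -> R v w -> R u w) /\
  (forall u v, R u v -> R v u -> u = v).

Definition labelled_frame (Sigma : fset) {W : Type}
    (le : W -> W -> Prop) (l : W -> ftype) : Prop :=
  partial_order le /\
  (forall w, sigma_type Sigma (l w)) /\
  (forall w v, le w v -> le_T (l w) (l v)) /\
  (forall w f g, neg (l w) (Imp f g) ->
     exists v, le w v /\ pos (l v) f /\ neg (l v) g).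

Definition forward_confluent {W : Type} (le S : W -> W -> Prop) : Prop :=
  forall w w' v, le w w' -> S w v -> exists v', le v v' /\ S w' v'.

Definition sensible {W : Type} (S : W -> W -> Prop) (l : W -> ftype) : Prop :=
  forall w v, S w v -> S_T (l w) (l v).

Definition weak_quasimodel (Sigma : fset) {W : Type}
    (le S : W -> W -> Prop) (l : W -> ftype) : Prop :=
  labelled_frame Sigma le l /\ forward_confluent le S /\ sensible S l.

Definition is_function {W : Type} (S : W -> W -> Prop) : Prop :=
  forall w, exists v, S w v /\ forall v', S w v' -> v' = v.

Definition deterministic_weak_quasimodel (Sigma : fset) {W : Type}
    (le S : W -> W -> Prop) (l : W -> ftype) : Prop :=
  weak_quasimodel Sigma le S l /\ is_function S.

Definition Lang : fset := fun _ => True.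

Definition Wc : Type := { P : ftype | prime_type P }.
Definition le_c (x y : Wc) : Prop := le_T (proj1_sig x) (proj1_sig y).
Definition S_c (x y : Wc) : Prop := S_T (proj1_sig x) (proj1_sig y).
Definition l_c (x : Wc) : ftype := proj1_sig x.

(* Main.v *)
Require Import Defs.
From Stdlib Require Import List Classical FunctionalExtensionality PropExtensionality ProofIrrelevance Arith.
From Stdlib Require Cantor.
Import ListNotations.

Inductive Pr (H : list form) : form -> Prop :=
| pr_hyp : forall f, In f H -> Pr H f
| pr_thm : forall f, ITL0 f -> Pr H f
| pr_mp : forall f g, Pr H (Imp f g) -> Pr H f -> Pr H g.

Lemma thm_I p : ITL0 (Imp p p).
Proof.
  apply r_mp with (Imp p (Imp p p)); [apply r_mp with (Imp p (Imp (Imp p p) p)); [apply ax_S|apply ax_K] | apply ax_K].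
Qed.

Lemma deduction H a b : Pr (a::H) b -> Pr H (Imp a b).
Proof.
  induction 1.
  - destruct H0 as [<-|Hin].
    + apply pr_thm, thm_I.
    + apply pr_mp with f; [apply pr_thm, ax_K | apply pr_hyp; auto].
  - apply pr_mp with f; [apply pr_thm, ax_K | apply pr_thm; auto].
  - apply pr_mp with (Imp a f); [apply pr_mp with (Imp a (Imp f g)); [apply pr_thm, ax_S|]|]; assumption.
Qed.

Lemma pr_subst H H' f : Pr H f -> (forall x, In x H -> Pr H' x) -> Pr H' f.
Proof.
  induction 1; intros Hs.
  - auto.
  - apply pr_thm; auto.
  - apply pr_mp with f; auto.
Qed.

Lemma pr_weak H H' f : Pr H f -> (forall x, In x H -> In x H') -> Pr H' f.
Proof. intros Hp Hi. apply (pr_subst _ _ _ Hp). intros; apply pr_hyp; auto. Qed.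

Lemma pr_nil f : Pr [] f -> ITL0 f.
Proof. induction 1; [destruct H|auto|eapply r_mp; eauto]. Qed.

Lemma app1 H p q : ITL0 (Imp p q) -> Pr H p -> Pr H q.
Proof. intros; apply pr_mp with p; [apply pr_thm|]; auto. Qed.

Lemma app2 H p q r : ITL0 (Imp p (Imp q r)) -> Pr H p -> Pr H q -> Pr H r.
Proof. intros; apply pr_mp with q; [apply pr_mp with p; [apply pr_thm|]|]; auto. Qed.

Lemma hyp0 H a : Pr (a :: H) a.
Proof. apply pr_hyp; simpl; auto. Qed.

Lemma pr_orE H a b c : Pr H (Or a b) -> Pr (a::H) c -> Pr (b::H) c -> Pr H c.
Proof.
  intros h1 h2 h3. apply deduction in h2. apply deduction in h3.
  apply pr_mp with (Or a b); auto.
  apply pr_mp with (Imp b c); auto.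
  apply pr_mp with (Imp a c); auto. apply pr_thm, ax_orE.
Qed.

Lemma pr_bigAnd G : Pr G (bigAnd G).
Proof.
  induction G; simpl.
  - apply pr_thm, ax_efq.
  - apply app2 with a (bigAnd G); [apply ax_andI| apply hyp0|].
    apply (pr_weak _ _ _ IHG). simpl; auto.
Qed.

Lemma bigAnd_mem G x : In x G -> Pr [bigAnd G] x.
Proof.
  induction G; simpl; intros Hx; [destruct Hx|].
  destruct Hx as [->|Hx].
  - apply app1 with (And x (bigAnd G)); [apply ax_andE1|apply hyp0].
  - apply (pr_subst _ _ _ (IHG Hx)). intros y [<-|[]].
    apply app1 with (And a (bigAnd G)); [apply ax_andE2|apply hyp0].
Qed.

Lemma itl_of_pr G f : Pr G f -> ITL0 (Imp (bigAnd G) f).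
Proof.
  intros h. apply pr_nil, deduction. apply (pr_subst _ _ _ h).
  intros; apply bigAnd_mem; auto.
Qed.

Lemma pr_of_itl G f : ITL0 (Imp (bigAnd G) f) -> Pr G f.
Proof. intros h. apply app1 with (bigAnd G); auto. apply pr_bigAnd. Qed.

Lemma bigOr_mem H D x : In x D -> Pr H x -> Pr H (bigOr D).
Proof.
  induction D; simpl; intros Hx Hp; [destruct Hx|].
  destruct Hx as [->|Hx].
  - apply app1 with x; [apply ax_orI1|auto].
  - apply app1 with (bigOr D); [apply ax_orI2|auto].
Qed.

Lemma bigOr_incl D D' : forall H, (forall x, In x D -> In x D') -> Pr H (bigOr D) -> Pr H (bigOr D').
Proof.
  induction D; simpl; intros H Hi Hp.
  - apply app1 with Bot; [apply ax_efq|auto].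
  - apply pr_orE with a (bigOr D); auto.
    + apply bigOr_mem with a; auto. apply hyp0.
    + apply IHD; auto. apply hyp0.
Qed.

Definition ent (A B : fset) : Prop :=
  exists G D, (forall f, In f G -> A f) /\ (forall f, In f D -> B f) /\ Pr G (bigOr D).

Lemma ent_iff A B : entails A B <-> ent A B.
Proof.
  split; intros (G & D & h1 & h2 & h3); exists G, D; repeat split; auto.
  - apply pr_of_itl; auto.
  - apply itl_of_pr; auto.
Qed.

Lemma ent_mono (A B A' B' : fset) : ent A B -> (forall x, A x -> A' x) -> (forall x, B x -> B' x) -> ent A' B'.
Proof. intros (G & D & h1 & h2 & h3) ha hb; exists G, D; auto. Qed.

Lemma split_list (A : fset) f G : (forall x, In x G -> A x \/ x = f) ->
  exists G', (forall x, In x G' -> A x) /\ (forall x, In x G -> In x (f::G')).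
Proof.
  induction G; intros h.
  - exists []; simpl; split; tauto.
  - destruct IHG as (G' & h1 & h2). { intros; apply h; simpl; auto. }
    destruct (h a (or_introl eq_refl)) as [ha|ha].
    + exists (a::G'); split.
      * intros x [<-|hx]; auto.
      * intros x [<-|hx]; simpl; auto. apply h2 in hx; simpl in hx; tauto.
    + exists G'; split; auto. intros x [<-|hx]; simpl; auto. subst; auto. apply h2 in hx; exact hx.
Qed.

Lemma ent_cut (A B : fset) f : ent (fun x => A x \/ x = f) B -> ent A (fun x => B x \/ x = f) -> ent A B.
Proof.
  intros (G1 & D1 & h1 & h2 & h3) (G2 & D2 & k1 & k2 & k3).
  destruct (split_list A f G1 h1) as (G1' & a1 & a2).
  destruct (split_list B f D2 k2) as (D2' & b1 & b2).
  exists (G1' ++ G2), (D1 ++ D2'). split; [|split].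
  - intros x hx; apply in_app_iff in hx; destruct hx; auto.
  - intros x hx; apply in_app_iff in hx; destruct hx; auto.
  - apply pr_orE with f (bigOr D2').
    + apply (bigOr_incl D2 (f::D2')); auto. apply (pr_weak _ _ _ k3).
      intros; apply in_app_iff; auto.
    + apply (bigOr_incl D1); [intros; apply in_app_iff; auto|].
      apply (pr_weak _ _ _ h3). intros x hx. apply a2 in hx. destruct hx as [<-|hx]; simpl; auto.
      right; apply in_app_iff; auto.
    + apply (bigOr_incl D2'); [intros; apply in_app_iff; auto|]. apply hyp0.
Qed.

Lemma prime_no P : prime_type P -> forall G D, (forall f, In f G -> pos P f) ->
  (forall f, In f D -> neg P f) -> Pr G (bigOr D) -> False.
Proof.
  intros [_ hp] G D h1 h2 h3. apply hp, ent_iff. exists G, D; auto.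
Qed.

Ltac inl1 := solve [let x := fresh in let h := fresh in intros x h; simpl in h;
  repeat (destruct h as [h|h]; [subst x; assumption|]); destruct h].

Lemma prime_disj P f : prime_type P -> neg P f -> pos P f -> False.
Proof.
  intros hP hn hp. apply (prime_no P hP [f] [f]); try inl1.
  apply bigOr_mem with f; simpl; auto. apply hyp0.
Qed.

Lemma prime_neg P f : prime_type P -> (neg P f <-> ~ pos P f).
Proof.
  intros hP; split.
  - intros hn hp; eapply prime_disj; eauto.
  - intros hp. destruct (proj1 hP f); tauto.
Qed.

Lemma prime_pos P f : prime_type P -> (pos P f <-> ~ neg P f).
Proof.
  intros hP; split.
  - intros hn hp; eapply prime_disj; eauto.
  - intros hp. destruct (proj1 hP f); tauto.
Qed.

Lemma prime_sigma P : prime_type P -> sigma_type Lang P.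
Proof.
  intros hP. pose proof (prime_neg P) as PN. pose proof (prime_pos P) as PP.
  split; [|split; [|split; [|split; [|split; [|split]]]]].
  - intros f [h1 h2]; eapply prime_disj; eauto.
  - intros f; split; intros _; [apply (proj1 hP)|exact I].
  - intros hb. apply (prime_no P hP [Bot] []); try inl1. apply hyp0.
  - intros f g _; split.
    + intros h; split; apply PP; auto; intros hn.
      * apply (prime_no P hP [And f g] [f]); try inl1.
        apply bigOr_mem with f; simpl; auto. apply app1 with (And f g); [apply ax_andE1|apply hyp0].
      * apply (prime_no P hP [And f g] [g]); try inl1.
        apply bigOr_mem with g; simpl; auto. apply app1 with (And f g); [apply ax_andE2|apply hyp0].
    + intros [h1 h2]; apply PP; auto; intros hn.
      apply (prime_no P hP [f; g] [And f g]); try inl1.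
      apply bigOr_mem with (And f g); simpl; auto. apply app2 with f g; [apply ax_andI|apply hyp0|apply pr_hyp; simpl; auto].
  - intros f g _; split.
    + intros h. apply NNPP; intros hn. apply (prime_no P hP [Or f g] [f; g]); try inl1.
      * intros x hx; simpl in hx; destruct hx as [<-|[<-|[]]]; apply PN; auto.
      * apply pr_orE with f g; [apply hyp0| |]; [apply bigOr_mem with f|apply bigOr_mem with g]; simpl; auto; apply hyp0.
    + intros h; apply PP; auto; intros hn. destruct h as [h|h].
      * apply (prime_no P hP [f] [Or f g]); try inl1.
        apply bigOr_mem with (Or f g); simpl; auto. apply app1 with f; [apply ax_orI1|apply hyp0].
      * apply (prime_no P hP [g] [Or f g]); try inl1.
        apply bigOr_mem with (Or f g); simpl; auto. apply app1 with g; [apply ax_orI2|apply hyp0].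
  - intros f g h. apply NNPP; intros hn.
    assert (pos P f) by (apply PP; tauto). assert (neg P g) by (apply PN; tauto).
    apply (prime_no P hP [Imp f g; f] [g]); try inl1.
    apply bigOr_mem with g; simpl; auto. apply pr_mp with f; apply pr_hyp; simpl; auto.
  - intros f h. apply PN; auto; intros hp.
    apply (prime_no P hP [f] [Dia f]); try inl1.
    apply bigOr_mem with (Dia f); simpl; auto. apply app1 with (Or f (Next (Dia f))); [apply ax_diafix|].
    apply app1 with f; [apply ax_orI1|apply hyp0].
Qed.

Definition succ (P : ftype) : ftype := (fun f => neg P (Next f), fun f => pos P (Next f)).

Lemma next_pr G f : Pr G f -> Pr (map Next G) (Next f).
Proof.
  induction 1.
  - apply pr_hyp, in_map; auto.
  - apply pr_thm, r_nec; auto.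
  - apply app2 with (Next (Imp f g)) (Next f); auto. apply ax_nextimp.
Qed.

Lemma next_bigOr D : forall H, Pr H (Next (bigOr D)) -> Pr H (bigOr (map Next D)).
Proof.
  induction D; simpl; intros H h.
  - apply app1 with (Next Bot); auto. apply ax_nextbot.
  - apply pr_orE with (Next a) (Next (bigOr D)).
    + apply app1 with (Next (Or a (bigOr D))); auto. apply ax_nextor.
    + apply app1 with (Next a); [apply ax_orI1|apply hyp0].
    + apply app1 with (bigOr (map Next D)); [apply ax_orI2|]. apply IHD, hyp0.
Qed.

Lemma succ_prime P : prime_type P -> prime_type (succ P).
Proof.
  intros hP; split.
  - intros f; apply (proj1 hP).
  - intros h. apply ent_iff in h. destruct h as (G & D & h1 & h2 & h3).
    apply (prime_no P hP (map Next G) (map Next D)).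
    + intros f hf; apply in_map_iff in hf; destruct hf as (x & <- & hx); apply h1; auto.
    + intros f hf; apply in_map_iff in hf; destruct hf as (x & <- & hx); apply h2; auto.
    + apply next_bigOr, next_pr; auto.
Qed.

Lemma itl_imp_pr p q : Pr [p] q -> ITL0 (Imp p q).
Proof. intros h; apply pr_nil, deduction; auto. Qed.

Lemma f_dia f : ITL0 (Imp f (Dia f)).
Proof.
  apply itl_imp_pr. apply app1 with (Or f (Next (Dia f))); [apply ax_diafix|].
  apply app1 with f; [apply ax_orI1|apply hyp0].
Qed.

Lemma nextdia_dia f : ITL0 (Imp (Next (Dia f)) (Dia f)).
Proof.
  apply itl_imp_pr. apply app1 with (Or f (Next (Dia f))); [apply ax_diafix|].
  apply app1 with (Next (Dia f)); [apply ax_orI2|apply hyp0].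
Qed.

Lemma dia_unfold f : ITL0 (Imp (Dia f) (Or f (Next (Dia f)))).
Proof.
  set (p := Or f (Next (Dia f))).
  assert (hi : ITL0 (Imp (Next p) p)).
  { apply itl_imp_pr. apply pr_orE with (Next f) (Next (Next (Dia f))).
    - apply app1 with (Next p); [apply ax_nextor|apply hyp0].
    - apply app1 with (Next (Dia f)); [apply ax_orI2|].
      apply app2 with (Next (Imp f (Dia f))) (Next f); [apply ax_nextimp| apply pr_thm, r_nec, f_dia|apply hyp0].
    - apply app1 with (Next (Dia f)); [apply ax_orI2|].
      apply app2 with (Next (Imp (Next (Dia f)) (Dia f))) (Next (Next (Dia f)));
        [apply ax_nextimp| apply pr_thm, r_nec, nextdia_dia|apply hyp0]. }
  apply r_ind in hi.
  assert (hm : ITL0 (Imp (Dia f) (Dia p))).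
  { apply r_diamon. apply itl_imp_pr. apply app1 with f; [apply ax_orI1|apply hyp0]. }
  apply itl_imp_pr. apply app1 with (Dia p); auto. apply app1 with (Dia f); auto. apply hyp0.
Qed.

Lemma succ_ST P : prime_type P -> S_T P (succ P).
Proof.
  intros hP. split; [|split; [|split]]; simpl; auto.
  - intros f [h1 h2]. apply (prime_pos P _ hP); intros hn.
    apply (prime_no P hP [Dia f] [f; Next (Dia f)]); try inl1.
    apply pr_orE with f (Next (Dia f)); [apply app1 with (Dia f); [apply dia_unfold|apply hyp0]| |];
      [apply bigOr_mem with f|apply bigOr_mem with (Next (Dia f))]; simpl; auto; apply hyp0.
  - intros f h. apply (prime_neg P _ hP); intros hp.
    apply (prime_no P hP [Next (Dia f)] [Dia f]); try inl1.
    apply bigOr_mem with (Dia f); simpl; auto. apply app1 with (Next (Dia f)); [apply nextdia_dia|apply hyp0].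
Qed.

Fixpoint code (f : form) : nat :=
  match f with
  | Var n => Cantor.to_nat (0, n)
  | Bot => Cantor.to_nat (1, 0)
  | And a b => Cantor.to_nat (2, Cantor.to_nat (code a, code b))
  | Or a b => Cantor.to_nat (3, Cantor.to_nat (code a, code b))
  | Imp a b => Cantor.to_nat (4, Cantor.to_nat (code a, code b))
  | Next a => Cantor.to_nat (5, code a)
  | Dia a => Cantor.to_nat (6, code a)
  end.

Lemma to_nat_inj p q : Cantor.to_nat p = Cantor.to_nat q -> p = q.
Proof. intros h. rewrite <- (Cantor.cancel_of_to p), <- (Cantor.cancel_of_to q), h; reflexivity. Qed.

Arguments Cantor.to_nat : simpl never.

Lemma code_inj : forall f g, code f = code g -> f = g.
Proof.
  induction f; destruct g; simpl; intro H; apply to_nat_inj in H; try discriminate H;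
    try reflexivity; injection H; clear H; intros; subst; auto;
    try (apply to_nat_inj in H; injection H; clear H; intros);
    try (rewrite (IHf1 _ H0), (IHf2 _ H); reflexivity);
    try (rewrite (IHf _ H); reflexivity).
Qed.

Section Lind.
Variables Gam Del : fset.

Fixpoint chain (n : nat) : fset * fset :=
  match n with
  | 0 => (Gam, Del)
  | S m =>
    (fun f => fst (chain m) f \/ (code f = m /\ ~ ent (fun x => fst (chain m) x \/ x = f) (snd (chain m))),
     fun f => snd (chain m) f \/ (code f = m /\ ent (fun x => fst (chain m) x \/ x = f) (snd (chain m))))
  end.

Lemma chain_cons : ~ ent Gam Del -> forall n, ~ ent (fst (chain n)) (snd (chain n)).
Proof.
  intros h0; induction n; simpl; auto.
  set (A := fst (chain n)) in *. set (B := snd (chain n)) in *.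
  intros he.
  destruct (classic (exists f, code f = n)) as [[f0 hf0]|hno].
  - destruct (classic (ent (fun x => A x \/ x = f0) B)) as [E|E].
    + apply IHn, (ent_cut A B f0 E). apply (ent_mono _ _ _ _ he).
      * intros x [hx|[hc hx]]; auto. assert (x = f0) by (apply code_inj; congruence). subst; tauto.
      * intros x [hx|[hc hx]]; auto. right; apply code_inj; congruence.
    + apply E. apply (ent_mono _ _ _ _ he).
      * intros x [hx|[hc hx]]; auto. right; apply code_inj; congruence.
      * intros x [hx|[hc hx]]; auto. assert (x = f0) by (apply code_inj; congruence). subst; tauto.
  - apply IHn. apply (ent_mono _ _ _ _ he).
    + intros x [hx|[hc hx]]; auto. exfalso; eauto.
    + intros x [hx|[hc hx]]; auto. exfalso; eauto.
Qed.

Lemma chain_mono m n : m <= n -> forall f, (fst (chain m) f -> fst (chain n) f) /\ (snd (chain m) f -> snd (chain n) f).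
Proof.
  induction 1; intros f; auto. destruct (IHle f) as [a b]; simpl; split; intros; [left|left]; auto.
Qed.

Lemma fin_bound (F : nat -> fset) : (forall m n x, m <= n -> F m x -> F n x) ->
  forall G, (forall x, In x G -> exists n, F n x) -> exists N, forall x, In x G -> F N x.
Proof.
  intros hm; induction G; intros h.
  - exists 0; intros x [].
  - destruct IHG as [N hN]. { intros; apply h; simpl; auto. }
    destruct (h a (or_introl eq_refl)) as [k hk].
    exists (max N k). intros x [<-|hx].
    + apply hm with k; auto. apply Nat.le_max_r.
    + apply hm with N; auto. apply Nat.le_max_l.
Qed.

Lemma lindenbaum : ~ ent Gam Del -> exists P, prime_type P /\ (forall f, Gam f -> pos P f) /\ (forall f, Del f -> neg P f).
Proof.
  intros h0.
  exists (fun f => exists n, snd (chain n) f, fun f => exists n, fst (chain n) f).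
  split; [split|split].
  - intros f. simpl. destruct (classic (ent (fun x => fst (chain (code f)) x \/ x = f) (snd (chain (code f))))) as [E|E].
    + left; exists (S (code f)); simpl; auto.
    + right; exists (S (code f)); simpl; auto.
  - intros he. apply ent_iff in he. destruct he as (G & D & h1 & h2 & h3). simpl in h1, h2.
    destruct (fin_bound (fun n => fst (chain n))) with G as [N1 hN1]; auto.
    { intros m n x hmn; apply (chain_mono m n hmn). }
    destruct (fin_bound (fun n => snd (chain n))) with D as [N2 hN2]; auto.
    { intros m n x hmn; apply (chain_mono m n hmn). }
    apply (chain_cons h0 (max N1 N2)). exists G, D; split; [|split]; auto.
    + intros x hx; apply (chain_mono N1); auto. apply Nat.le_max_l.
    + intros x hx; apply (chain_mono N2); auto. apply Nat.le_max_r.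
  - intros f hf; exists 0; auto.
  - intros f hf; exists 0; auto.
Qed.
End Lind.

Lemma Wc_eq (x y : Wc) : (forall f, pos (l_c x) f <-> pos (l_c y) f) -> x = y.
Proof.
  destruct x as [[n1 p1] h1], y as [[n2 p2] h2]. unfold l_c; simpl. intros h.
  assert (ep : p1 = p2).
  { apply functional_extensionality; intros f; apply propositional_extensionality; apply h. }
  subst p2.
  assert (en : n1 = n2).
  { apply functional_extensionality; intros f; apply propositional_extensionality.
    rewrite (prime_neg (n1, p1) f h1), (prime_neg (n2, p1) f h2). simpl; tauto. }
  subst n2. f_equal. apply proof_irrelevance.
Qed.

Theorem proposition4p4 : deterministic_weak_quasimodel Lang le_c S_c l_c.
Proof.
  assert (succW : forall w : Wc, {v : Wc | l_c v = succ (l_c w)}).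
  { intros w. exists (exist _ (succ (l_c w)) (succ_prime _ (proj2_sig w))). reflexivity. }
  assert (uniq : forall w v : Wc, S_c w v -> forall f, pos (l_c v) f <-> pos (l_c w) (Next f)).
  { intros w v hs f; split.
    - intros hp. apply (prime_pos _ _ (proj2_sig w)); intros hn.
      apply (prime_disj (l_c v) f (proj2_sig v)); auto. apply (proj1 (proj2 hs)); auto.
    - intros hp; apply (proj1 hs); auto. }
  split; [split; [split|split]|].
  - split; [|split].
    + intros w f; auto.
    + intros u v w a b f hf. apply b, a, hf.
    + intros u v a b; apply Wc_eq; intros f; split; [apply a|apply b].
  - split; [|split].
    + intros w; apply prime_sigma, (proj2_sig w).
    + intros w v h; exact h.
    + intros w f g hn.
      destruct (lindenbaum (fun x => pos (l_c w) x \/ x = f) (fun x => x = g)) as (P & hP & hG & hD).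
      * intros (G & D & h1 & h2 & h3).
        destruct (split_list _ f G h1) as (G' & a1 & a2).
        apply (prime_no (l_c w) (proj2_sig w) G' [Imp f g]); auto.
        { intros x [<-|[]]; auto. }
        apply bigOr_mem with (Imp f g); simpl; auto. apply deduction.
        apply pr_orE with g Bot.
        -- apply (bigOr_incl D [g]). { intros x hx; apply h2 in hx; simpl; auto. }
           apply (pr_weak _ _ _ h3); auto.
        -- apply hyp0.
        -- apply app1 with Bot; [apply ax_efq|apply hyp0].
      * exists (exist _ P hP); unfold le_c, l_c; simpl; split; [|split].
        -- intros x hx; apply hG; auto.
        -- apply hG; auto.
        -- apply hD; auto.
  - intros w w' v hle hs. destruct (succW w') as [v' hv'].
    exists v'; split.
    + intros f hf. unfold l_c in hv'. rewrite hv'. simpl. apply hle. apply (uniq w v hs); auto.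
    + unfold S_c. unfold l_c in hv'; rewrite hv'. apply succ_ST, (proj2_sig w').
  - intros w v hs; exact hs.
  - intros w. destruct (succW w) as [v hv]. exists v; split.
    + unfold S_c. unfold l_c in hv; rewrite hv. apply succ_ST, (proj2_sig w).
    + intros v' hs. apply Wc_eq. intros f. rewrite (uniq w v' hs f). rewrite hv; simpl. tauto.
Qed.
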